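(* Let $G\neq K_n$ be a simple graph with $n$ vertices and maximum degree $\Delta$. (i) If $0\leq \alpha< \frac{1}{\Delta+1}$, then $S_k(A_{\alpha}(G))\leq \frac{(1-\alpha)n}{2}(1+\sqrt{k})$ for every $2\leq k\leq n$. (ii) If $\frac{1}{\Delta+1}\leq \alpha< 1$, then $S_k(A_{\alpha}(G))\leq \frac{\alpha \Delta n}{2}(1+\sqrt{k})$ for every $2\leq k\leq n$.
   Context: All graphs are simple and undirected. For a graph $G$ with adjacency matrix $A(G)$ and diagonal degree matrix $D(G)$, and a real $\alpha\in[0,1]$, $A_{\alpha}(G)=\alpha D(G)+(1-\alpha)A(G)$. For a real symmetric $n\times n$ matrix $M$ with eigenvalues $\lambda_1(M)\geq\cdots\geq\lambda_n(M)$, $S_k(M)=\sum_{i=1}^k\lambda_i(M)$. $K_n$ is the complete graph on $n$ vertices. *)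

(* Defs.v *)
From HB Require Import structures.
From mathcomp Require Import all_boot all_order all_algebra.
Set Implicit Arguments. Unset Strict Implicit. Unset Printing Implicit Defensive.
Import Order.TTheory GRing.Theory Num.Theory.
Local Open Scope ring_scope.

Definition simple_graph (n : nat) (e : rel 'I_n) : Prop :=
  (forall i, ~~ e i i) /\ (forall i j, e i j = e j i).

Definition is_complete (n : nat) (e : rel 'I_n) : Prop :=
  forall i j : 'I_n, i != j -> e i j.

Definition deg (n : nat) (e : rel 'I_n) (i : 'I_n) : nat := #|[set j | e i j]|.

Definition max_deg (n : nat) (e : rel 'I_n) : nat := (\max_(i < n) deg e i)%N.

Definition adjmx (R : nzRingType) (n : nat) (e : rel 'I_n) : 'M[R]_n :=
  \matrix_(i, j) (e i j)%:R.

Definition degmx (R : nzRingType) (n : nat) (e : rel 'I_n) : 'M[R]_n :=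
  \matrix_(i, j) ((i == j)%:R * (deg e i)%:R).

Definition Aalpha (R : nzRingType) (n : nat) (e : rel 'I_n) (alpha : R) : 'M[R]_n :=
  alpha *: degmx R e + (1 - alpha) *: adjmx R e.

(* s is the list of eigenvalues of M (with multiplicity) in non-increasing
   order: lambda_1 >= ... >= lambda_n, i.e. s`_(i-1) = lambda_i. *)
Definition eigen_seq (R : realDomainType) (n : nat) (M : 'M[R]_n) (s : seq R) : Prop :=
  sorted (fun x y => y <= x) s /\ char_poly M = \prod_(x <- s) ('X - x%:P).

Definition Ssum (R : nmodType) (k : nat) (s : seq R) : R := \sum_(i < k) s`_i.

(* Main.v *)
Require Import Defs.
From HB Require Import structures.
From mathcomp Require Import all_boot all_order all_algebra.
From mathcomp Require Import complex sesquilinear spectral.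
From mathcomp Require Import ring lra.
Import Order.TTheory GRing.Theory Num.Theory.
Local Open Scope ring_scope.

Section Core.
Variable R : rcfType.
Local Notation C := (R[i]).
Local Notation toC := (real_complex R).
Local Notation Re := (@complex.Re R).
Local Notation Im := (@complex.Im R).

Lemma ReD (x y : C) : Re (x + y) = Re x + Re y.
Proof. by case: x => ? ?; case: y => ? ?. Qed.
Lemma Re0 : Re (0 : C) = 0. Proof. by []. Qed.
Lemma Re_sum (I : Type) (r : seq I) (P : pred I) (F : I -> C) :
  Re (\sum_(i <- r | P i) F i) = \sum_(i <- r | P i) Re (F i).
Proof. exact: (big_morph _ ReD Re0). Qed.
Lemma ReMC (a : R) (x : C) : Re (toC a * x) = a * Re x.
Proof. by case: x => x1 x2 /=; rewrite mul0r subr0. Qed.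
Lemma ReMCr (a : R) (x y : C) : Re (x * toC a * y) = a * Re (x * y).
Proof. case: x => x1 x2; case: y => y1 y2 /=. ring. Qed.
Lemma Re_nat (m : nat) : Re (m%:R : C) = m%:R.
Proof. elim: m => // m IH; by rewrite -addn1 !natrD ReD IH. Qed.
Lemma ReJ (x : C) : Re (x^*)%C = Re x. Proof. by case: x. Qed.
Lemma ReMJ (x : C) : Re (x * x^*%C) = Re x ^+ 2 + Im x ^+ 2.
Proof. case: x => x1 x2 /=. ring. Qed.
Lemma ReMJ_ge0 (x : C) : 0 <= Re (x * x^*%C).
Proof. by rewrite ReMJ addr_ge0 // sqr_ge0. Qed.
Lemma Re_sqr_le (x : C) : Re x ^+ 2 <= Re (x * x^*%C).
Proof. by rewrite ReMJ lerDl sqr_ge0. Qed.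
Lemma conj_nat (m : nat) : ((m%:R : C)^*)%C = m%:R.
Proof. exact: conjc_nat. Qed.
Lemma conj_sum (I : Type) (r : seq I) (P : pred I) (F : I -> C) :
  ((\sum_(i <- r | P i) F i)^*)%C = \sum_(i <- r | P i) (F i)^*%C.
Proof. exact: rmorph_sum. Qed.


Variables (n : nat) (P : 'I_n -> 'I_n -> C).
Hypothesis U1 : forall i i', \sum_j P i j * (P i' j)^*%C = (i == i')%:R.
Hypothesis U2 : forall j l, \sum_i (P i j)^*%C * P i l = (j == l)%:R.

Let w i j l := Re (P i j * (P i l)^*%C).

Lemma L1 : \sum_i \sum_j \sum_l w i j l = n%:R.
Proof.
rewrite /w; under eq_bigr do under eq_bigr do rewrite -Re_sum.
under eq_bigr do rewrite -Re_sum.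
rewrite -Re_sum exchange_big /=.
under eq_bigr do rewrite exchange_big /=.
have H : forall j l, \sum_i P i j * (P i l)^*%C = (j == l)%:R.
  move=> j l; rewrite -[RHS]conj_nat -U2 conj_sum; apply: eq_bigr => i _.
  by rewrite rmorphM /= conjcK mulrC.
under eq_bigr do under eq_bigr do rewrite H.
rewrite Re_sum.
rewrite (eq_bigr (fun _ => 1)); last first.
  move=> j _; rewrite Re_sum (bigD1 j) //= eqxx big1 ?addr0 ?Re_nat //.
  by move=> l /negbTE; rewrite eq_sym => ->.
by rewrite sumr_const card_ord.
Qed.


Lemma L2 i : 0 <= \sum_j \sum_l w i j l.
Proof.
have -> : \sum_j \sum_l w i j l = Re ((\sum_j P i j) * (\sum_l P i l)^*%C).
  rewrite conj_sum mulr_suml Re_sum; apply: eq_bigr => j _.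
  by rewrite mulr_sumr Re_sum.
exact: ReMJ_ge0.
Qed.

Variable I : {set 'I_n}.

Lemma L3 : \sum_j \sum_l (\sum_(i in I) w i j l) ^+ 2 <= #|I|%:R.
Proof.
pose Q j l := \sum_(i in I) P i j * (P i l)^*%C.
have HQ j l : \sum_(i in I) w i j l = Re (Q j l) by rewrite Re_sum.
have -> : (#|I|%:R : R) = Re (\sum_j \sum_l Q j l * (Q j l)^*%C).
  have -> : \sum_j \sum_l Q j l * (Q j l)^*%C =
     \sum_(i in I) \sum_(i' in I) (\sum_j P i j * (P i' j)^*%C) * ((\sum_l P i l * (P i' l)^*%C)^*)%C.
    rewrite /Q.
    under eq_bigr do under eq_bigr do rewrite conj_sum mulr_suml.
    under eq_bigr do under eq_bigr do under eq_bigr do rewrite mulr_sumr.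
    under eq_bigr do rewrite exchange_big /=.
    rewrite exchange_big /=; apply: eq_bigr => i _.
    under eq_bigr do rewrite exchange_big /=.
    rewrite exchange_big /=; apply: eq_bigr => i' _.
    rewrite conj_sum mulr_suml; apply: eq_bigr => j _.
    rewrite mulr_sumr; apply: eq_bigr => l _.
    by rewrite !rmorphM /= conjcK; ring.
  under eq_bigr do under eq_bigr do rewrite !U1.
  rewrite Re_sum -sum1_card natr_sum; apply: eq_bigr => i iI.
  rewrite Re_sum (bigD1 i) //= eqxx big1 ?addr0 ?conj_nat ?mulr1 ?Re_nat //.
  by move=> i' /andP[_ /negbTE]; rewrite eq_sym => ->; rewrite mul0r.
rewrite Re_sum; apply: ler_sum => j _; rewrite Re_sum; apply: ler_sum => l _.
by rewrite HQ Re_sqr_le.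
Qed.


Lemma amgm (b W c u : R) : 0 < u -> `|b| <= c -> 2 * b * W <= c ^+ 2 * u + W ^+ 2 / u.
Proof.
move=> u0 bc.
have -> : c ^+ 2 * u + W ^+ 2 / u = (c ^+ 2 * u ^+ 2 + W ^+ 2) / u.
  by field; rewrite gt_eqF.
rewrite ler_pdivlMr //.
have b2 : b ^+ 2 <= c ^+ 2 by rewrite -real_normK ?num_real // lerXn2r ?nnegrE ?normr_ge0 // (le_trans _ bc).
have h1 : 0 <= (b * u - W) ^+ 2 by rewrite sqr_ge0.
have h2 : 0 <= (c ^+ 2 - b ^+ 2) * u ^+ 2 by rewrite mulr_ge0 ?subr_ge0 ?sqr_ge0.
nra.
Qed.

Lemma core_bound (a : 'I_n -> 'I_n -> R) (c : R) :
  0 < c -> (forall j l, 0 <= a j l <= 2 * c) -> (0 < #|I|)%N ->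
  \sum_(i in I) \sum_j \sum_l a j l * w i j l <= c * n%:R * (1 + Num.sqrt #|I|%:R).
Proof.
move=> c0 ha I0.
have n0 : (0 < n)%N by apply: leq_trans I0 _; rewrite -[n in (_ <= n)%N]card_ord max_card.
pose T i := \sum_j \sum_l w i j l.
pose W j l := \sum_(i in I) w i j l.
have -> : \sum_(i in I) \sum_j \sum_l a j l * w i j l =
    c * \sum_(i in I) T i + \sum_j \sum_l (a j l - c) * W j l.
  rewrite /T /W mulr_sumr.
  under [X in _ = _ + X]eq_bigr do under eq_bigr do rewrite mulr_sumr.
  under [X in _ = _ + X]eq_bigr do rewrite exchange_big /=.
  rewrite [X in _ = _ + X]exchange_big /= -big_split /=; apply: eq_bigr => i _.
  rewrite mulr_sumr -big_split /=; apply: eq_bigr => j _.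
  rewrite mulr_sumr -big_split /=; apply: eq_bigr => l _.
  ring.
have B1 : \sum_(i in I) T i <= n%:R.
  rewrite -L1 [X in _ <= X](bigID (mem I)) /= lerDl sumr_ge0 // => i _.
  exact: L2.
set r := Num.sqrt (#|I|%:R : R).
have r0 : 0 < r by rewrite sqrtr_gt0 ltr0n.
have rk : r ^+ 2 = #|I|%:R by rewrite sqr_sqrtr // ler0n.
pose u := r / (n%:R * c).
have nc0 : 0 < n%:R * c by rewrite mulr_gt0 // ltr0n.
have u0 : 0 < u by rewrite divr_gt0.
have B2 : 2 * \sum_j \sum_l (a j l - c) * W j l <= c ^+ 2 * u * (n%:R * n%:R) + #|I|%:R / u.
  have : 2 * \sum_j \sum_l (a j l - c) * W j l <=
     \sum_j \sum_l (c ^+ 2 * u + W j l ^+ 2 / u).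
    rewrite mulr_sumr; apply: ler_sum => j _; rewrite mulr_sumr; apply: ler_sum => l _.
    rewrite mulrA; apply: amgm => //.
    have /andP[h1 h2] := ha j l.
    rewrite ler_norml; apply/andP; split; lra.
  move/le_trans; apply.
  under eq_bigr do rewrite big_split /= sumr_const card_ord -mulr_suml.
  rewrite big_split /= sumr_const card_ord -mulr_suml.
  have E : c ^+ 2 * u *+ n *+ n = c ^+ 2 * u * (n%:R * n%:R).
    by rewrite -natrM mulr_natr mulrnA.
  rewrite E; apply: lerD => //.
  by rewrite ler_pM2r ?invr_gt0 //; exact: L3.
have e1 : c ^+ 2 * u * (n%:R * n%:R) = c * n%:R * r.
  by rewrite /u; field; rewrite gt_eqF // pnatr_eq0 -lt0n n0.
have e2 : #|I|%:R / u = c * n%:R * r.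
  by rewrite -rk /u; field; rewrite !gt_eqF // ltr0n.
rewrite e1 e2 in B2.
have B1' : c * \sum_(i in I) T i <= c * n%:R by rewrite ler_pM2l.
move: B1' B2; set X := \sum_j _; set Y := c * \sum_(i in I) T i.
move=> h1 h2.
have -> : c * n%:R * (1 + r) = c * n%:R + (c * n%:R * r + c * n%:R * r) / 2 by field.
apply: lerD => //.
by rewrite ler_pdivlMr // mulrC.
Qed.

End Core.
Section Spec.
Variable R : rcfType.
Local Notation C := (R[i]).
Local Notation toC := (real_complex R).
Local Notation Re := (@complex.Re R).

Lemma char_poly_similar n (P D : 'M[C]_n) : P \in unitmx ->
  char_poly (invmx P *m D *m P) = char_poly D.
Proof.
move=> Pu; rewrite /char_poly.
set Pi := map_mx polyC (invmx P); set Pp := map_mx polyC P.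
have PiPp : Pi *m Pp = 1%:M by rewrite -map_mxM mulVmx // map_mx1.
have -> : char_poly_mx (invmx P *m D *m P) = Pi *m char_poly_mx D *m Pp.
  rewrite /char_poly_mx !map_mxM mulmxBr mulmxBl -/Pi -/Pp.
  by rewrite mul_mx_scalar -scalemxAl PiPp scalemx1.
rewrite !det_mulmx mulrC mulrA -det_mulmx.
have -> : Pp *m Pi = 1%:M by apply: mulmx1C.
by rewrite det1 mul1r.
Qed.

Lemma trmxC_entry n (M : 'M[C]_n) i j : (M ^t* )%sesqui i j = ((M j i)^*)%C.
Proof. by rewrite !mxE. Qed.


Lemma spec n (A : 'M[R]_n) (s : seq R) : A^T = A ->
  char_poly A = \prod_(x <- s) ('X - x%:P) ->
  exists (P : 'M[C]_n) (d : 'rV[C]_n),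
  [/\ (forall i i', \sum_j P i j * (P i' j)^*%C = (i == i')%:R),
      (forall j l, \sum_i (P i j)^*%C * P i l = (j == l)%:R),
      (forall i, Re (d 0 i) = \sum_j \sum_l A j l * Re (P i j * (P i l)^*%C)) &
      perm_eq (map toC s) [seq d 0 i | i <- enum 'I_n]].
Proof.
move=> Asym Achar.
set Ac := map_mx toC A.
have Aherm : Ac \is hermsymmx.
  apply: realsym_hermsym.
    apply/is_hermitianmxP; rewrite expr0 scale1r; apply/matrixP => i j.
    by rewrite !mxE -[in LHS]Asym mxE.
  apply/mxOverP => i j; rewrite mxE.
  by rewrite /= complex_real.
have /orthomx_spectralP EA := hermitian_normalmx Aherm.
set P := spectralmx Ac in EA *; set d := spectral_diag Ac in EA *.
have Pun : P \is unitarymx := spectral_unitarymx Ac.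
have U1m : P *m (P ^t*)%sesqui = 1%:M by apply/unitarymxP.
have U2m : (P ^t*)%sesqui *m P = 1%:M by apply: mulmx1C.
have Pu : P \in unitmx := spectral_unit Ac.
exists P, d; split.
- move=> i i'; move/matrixP: U1m => /(_ i i').
  rewrite !mxE => <-; apply: eq_bigr => j _; by rewrite !mxE.
- move=> j l; move/matrixP: U2m => /(_ j l).
  rewrite !mxE => <-; apply: eq_bigr => i _; by rewrite !mxE.
- move=> i.
  have HD : P *m Ac *m (P ^t*)%sesqui = diag_mx d.
    rewrite [in LHS]EA invmx_unitary // !mulmxA U1m mul1mx -mulmxA U1m mulmx1.
    done.
  move/matrixP: HD => /(_ i i); rewrite [in RHS]mxE eqxx mulr1n => <-.
  rewrite mxE Re_sum [RHS]exchange_big /=; apply: eq_bigr => m _.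
  rewrite mxE mulr_suml Re_sum; apply: eq_bigr => j _.
  by rewrite !mxE ReMCr.
- apply: prod_XsubC_eq.
  rewrite big_map.
  have -> : \prod_(j <- s) ('X - (toC j)%:P) = map_poly toC (char_poly A).
    rewrite Achar rmorph_prod; apply: eq_bigr => x _; by rewrite /= map_polyXsubC.
  rewrite map_char_poly -/Ac EA char_poly_similar // char_poly_trig ?diag_mx_is_trig //.
  rewrite big_map big_enum /=; apply: eq_bigr => i _; by rewrite mxE eqxx mulr1n.
Qed.


Lemma sum_take_set n (L : seq nat) (G : nat -> R) : uniq L -> (forall x, x \in L -> (x < n)%N) ->
  \sum_(i in [set i : 'I_n | val i \in L]) G i = \sum_(x <- L) G x.
Proof.
move=> uL Ln.
rewrite (eq_bigl (fun i : 'I_n => val i \in L)); last by move=> i; rewrite inE.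
rewrite -(big_mkord (fun x => x \in L) G) -big_filter.
apply: perm_big; apply: uniq_perm; rewrite ?filter_uniq ?iota_uniq //.
move=> x; rewrite mem_filter mem_iota add0n /=.
by case xL: (x \in L); rewrite ?andbF // subn0 (Ln _ xL).
Qed.

Lemma pick n k (s : seq R) (d : 'rV[C]_n) :
  perm_eq (map toC s) [seq d 0 i | i <- enum 'I_n] -> (k <= n)%N ->
  exists I : {set 'I_n}, #|I| = k /\ \sum_(i < k) s`_i = \sum_(i in I) Re (d 0 i).
Proof.
set dl := [seq d 0 i | i <- enum 'I_n] => pe kn.
have sdl : size dl = n by rewrite size_map size_enum_ord.
have ss : size s = n by rewrite -sdl -(perm_size pe) size_map.
case/(perm_iotaP 0): pe => Is pIs Es.
rewrite sdl in pIs.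
have sIs : size Is = n by rewrite (perm_size pIs) size_iota.
have uIs : uniq Is by rewrite (perm_uniq pIs) iota_uniq.
have Isn x : x \in Is -> (x < n)%N by rewrite (perm_mem pIs) mem_iota add0n.
set L := take k Is.
have uL : uniq L by rewrite take_uniq.
have Ln x : x \in L -> (x < n)%N by move=> /mem_take; apply: Isn.
have sL : size L = k by rewrite size_takel // sIs.
exists [set i : 'I_n | val i \in L]; split.
  apply/eqP; rewrite -(@eqr_nat R) -sumr_const.
  rewrite (@sum_take_set n L (fun _ => (1 : R))) //.
  rewrite -sL; apply/eqP; elim: (L) => [|x l IH]; first by rewrite big_nil.
  by rewrite big_cons IH /= -addn1 natrD addrC.
have Hd (i : 'I_n) : d 0 i = nth 0 dl i.
  by rewrite /dl (nth_map i) ?size_enum_ord // nth_ord_enum.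
under [RHS]eq_bigr do rewrite Hd.
rewrite (@sum_take_set n L (fun x => Re (nth 0 dl x))) //.
rewrite (big_nth 0%N) sL big_mkord; apply: eq_bigr => i _.
have ik : (i < k)%N := ltn_ord i.
have iN : (i < n)%N := leq_trans ik kn.
rewrite nth_take //.
have := congr1 (fun t => nth 0 t i) Es => /=.
rewrite (nth_map 0) ?ss // (nth_map 0%N) ?sIs // => <-.
by [].
Qed.

End Spec.

Section Main.
Variable R : rcfType.

Lemma Aalpha_sym n (e : rel 'I_n) (alpha : R) : simple_graph e ->
  (Aalpha e alpha)^T = Aalpha e alpha.
Proof.
move=> [_ sym]; apply/matrixP => i j; rewrite !mxE [e j i]sym.
case: (eqVneq i j) => [->|ij] //; by rewrite !mul0r.
Qed.

Lemma Aalpha_entry n (e : rel 'I_n) (alpha c : R) : simple_graph e ->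
  0 <= alpha -> alpha <= 1 -> 1 - alpha <= 2 * c -> alpha * (max_deg e)%:R <= 2 * c ->
  forall j l, 0 <= Aalpha e alpha j l <= 2 * c.
Proof.
move=> [irr sym] a0 a1 h1 h2 j l; rewrite !mxE.
have dj : ((deg e j)%:R : R) <= (max_deg e)%:R.
  by rewrite ler_nat /max_deg; apply: (leq_bigmax j).
case: (eqVneq j l) => [<-|jl].
  rewrite mul1r (negbTE (irr j)) mulr0 addr0.
  apply/andP; split; first by rewrite mulr_ge0.
  apply: le_trans h2; exact: ler_wpM2l.
rewrite mul0r mulr0 add0r.
case: (e j l); rewrite ?mulr1 ?mulr0; apply/andP; split; try lra.
Qed.

Lemma gen n (e : rel 'I_n) (alpha c : R) (k : nat) (s : seq R) :
  simple_graph e -> 0 < c ->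
  0 <= alpha -> alpha <= 1 -> 1 - alpha <= 2 * c -> alpha * (max_deg e)%:R <= 2 * c ->
  (2 <= k <= n)%N -> eigen_seq (Aalpha e alpha) s ->
  Ssum k s <= c * n%:R * (1 + Num.sqrt k%:R).
Proof.
move=> sg c0 a0 a1 h1 h2 /andP[k2 kn] [_ Hchar].
have [P [d [U1 U2 Hd pe]]] := @spec R n _ s (@Aalpha_sym n e alpha sg) Hchar.
have [I [cI HS]] := @pick R n k s d pe kn.
rewrite /Ssum HS.
under eq_bigr do rewrite Hd.
rewrite -cI.
apply: (@core_bound R n _ U1 U2) => //.
  exact: Aalpha_entry.
by rewrite cI; apply: leq_trans k2.
Qed.

End Main.

Theorem theorem3p1 (R : rcfType) (n : nat) (e : rel 'I_n) (alpha : R) :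
  simple_graph e -> ~ is_complete e ->
  (0 <= alpha -> alpha < ((max_deg e)%:R + 1)^-1 ->
     forall (k : nat) (s : seq R), (2 <= k <= n)%N ->
       eigen_seq (Aalpha e alpha) s ->
       Ssum k s <= (1 - alpha) * n%:R / 2 * (1 + Num.sqrt k%:R))
  /\
  (((max_deg e)%:R + 1)^-1 <= alpha -> alpha < 1 ->
     forall (k : nat) (s : seq R), (2 <= k <= n)%N ->
       eigen_seq (Aalpha e alpha) s ->
       Ssum k s <= alpha * (max_deg e)%:R * n%:R / 2 * (1 + Num.sqrt k%:R)).
Proof.
move=> sg _.
set D : R := (max_deg e)%:R.
have D0 : 0 <= D by rewrite ler0n.
have D1 : 0 < D + 1 by rewrite ltr_wpDl.
split.
- move=> a0 aD k s hk hs.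
  have aD' : alpha * (D + 1) < 1 by rewrite -ltr_pdivlMr // div1r.
  have a1 : alpha < 1 by nra.
  have -> : (1 - alpha) * n%:R / 2 * (1 + Num.sqrt k%:R) =
            ((1 - alpha) / 2) * n%:R * (1 + Num.sqrt k%:R) by rewrite [_ * n%:R / 2]mulrAC.
  apply: gen hk hs => //; try lra.
- move=> aD a1 k s hk hs.
  have aD' : 1 <= alpha * (D + 1) by rewrite -ler_pdivrMr // div1r.
  have a0 : 0 < alpha by apply: lt_le_trans aD; rewrite invr_gt0.
  have Dp : 0 < D.
    rewrite lt_neqAle D0 andbT; apply/negP => /eqP D0'.
    by move: aD'; rewrite -D0' add0r mulr1 => h; lra.
  have -> : alpha * D * n%:R / 2 * (1 + Num.sqrt k%:R) =
            (alpha * D / 2) * n%:R * (1 + Num.sqrt k%:R) by rewrite [_ * n%:R / 2]mulrAC.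
  apply: gen hk hs => //; try lra.
Qed.
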